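(* For every $m\ge3$, the $m$-candidate anti-plurality rule (score vector $(1,\dots,1,0)$) is not dominated by any other $m$-candidate positional rule.
   Context: For an $m$-candidate positional rule with score vector $w=(w_1,\dots,w_m)$, $1=w_1\ge\cdots\ge w_m=0$, let $\bar w=\frac1m\sum_iw_i$, $\sigma_w^2=\frac1m\sum_iw_i^2-\bar w^2$, $M_w=\{(\lambda,\mu):0\le\lambda\le\mu,\ w_{i+1}\lambda+(1-w_i)\mu\le1,\ i=1,\dots,m-1\}$, and $V_w=\sup\{\lambda(\rho_1(Z)-\bar Z)+\mu(\bar Z-\rho_2(Z)):(\lambda,\mu)\in\sigma_w(\frac{m}{m-1})^{1/2}M_w\}\in[0,\infty]$, where $Z=(Z_1,\dots,Z_m)$ has independent standard normal entries, $\bar Z$ is their mean and $\rho_j(Z)$ the $j$-th largest entry. (Under Impartial Culture, $V_w$ is the limiting distribution of the minimum manipulating coalition size divided by $\sqrt n$.) Let $g_w(v)=\mathbb P(V_w\le v)$. A rule $w$ dominates a rule $w'$ if $g_w(v)\le g_{w'}(v)$ for all $v\ge0$. *)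

(* Defs.v *)
From HB Require Import structures.
From mathcomp Require Import all_boot all_order all_algebra.
From mathcomp Require Import all_classical all_reals all_analysis.
Set Implicit Arguments. Unset Strict Implicit. Unset Printing Implicit Defensive.
Import Order.TTheory GRing.Theory Num.Theory.
Import numFieldNormedType.Exports.
Local Open Scope classical_set_scope.
Local Open Scope ring_scope.

(* Candidates / positions are indexed 0-based by 'I_m: w i is the paper's w_{i+1}. *)

Definition positional_rule (R : realType) (m : nat) (w : 'I_m -> R) : Prop :=
  (forall i : 'I_m, val i = 0%N -> w i = 1) /\
  (forall i : 'I_m, val i = m.-1 -> w i = 0) /\
  (forall i j : 'I_m, (val i <= val j)%N -> w j <= w i).

Definition antiplurality (R : realType) (m : nat) : 'I_m -> R :=
  fun i => if val i == m.-1 then 0 else 1.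

Definition mean_w (R : realType) (m : nat) (w : 'I_m -> R) : R :=
  (\sum_(i < m) w i) / m%:R.

Definition sigma_w (R : realType) (m : nat) (w : 'I_m -> R) : R :=
  Num.sqrt ((\sum_(i < m) w i ^+ 2) / m%:R - mean_w w ^+ 2).

Definition M_w (R : realType) (m : nat) (w : 'I_m -> R) : set (R * R) :=
  [set p | 0 <= p.1 /\ p.1 <= p.2 /\
     forall i j : 'I_m, val j = (val i).+1 ->
       w j * p.1 + (1 - w i) * p.2 <= 1].

Definition zbar (R : realType) (m : nat) (z : 'I_m -> R) : R :=
  (\sum_(i < m) z i) / m%:R.

(** rho j z = the j-th largest entry of z (j >= 1), counted with multiplicity. *)
Definition rho (R : realType) (m : nat) (j : nat) (z : 'I_m -> R) : R :=
  nth 0 (sort (fun x y : R => y <= x) [seq z i | i <- enum 'I_m]) j.-1.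

(** V_w as a function of the realisation z of Z, valued in [0, +oo]. *)
Definition V_w (R : realType) (m : nat) (w : 'I_m -> R) (z : 'I_m -> R) : \bar R :=
  let c := sigma_w w * Num.sqrt (m%:R / (m%:R - 1)) in
  ereal_sup [set x : \bar R | exists l u : R,
     (exists2 p, M_w w p & (l, u) = (c * p.1, c * p.2)) /\
     x = (l * (rho 1 z - zbar z) + u * (zbar z - rho 2 z))%:E].

Definition iid_std_normal (R : realType) d (T : measurableType d)
    (P : probability T R) (m : nat) (Z : 'I_m -> {RV P >-> R}) : Prop :=
  (forall (i : 'I_m) (A : set R), measurable A ->
     P (Z i @^-1` A) = normal_prob 0 1 A) /\
  (forall B : 'I_m -> set R, (forall i, measurable (B i)) ->
     P (\bigcap_(i in [set: 'I_m]) (Z i @^-1` B i)) =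
       (\prod_(i < m) P (Z i @^-1` B i))%E).

Definition g_w (R : realType) d (T : measurableType d) (P : probability T R)
    (m : nat) (Z : 'I_m -> {RV P >-> R}) (w : 'I_m -> R) (v : R) : \bar R :=
  P [set t | V_w w (fun i => Z i t) <= v%:E]%E.

Definition dominates (R : realType) d (T : measurableType d) (P : probability T R)
    (m : nat) (Z : 'I_m -> {RV P >-> R}) (w w' : 'I_m -> R) : Prop :=
  forall v : R, 0 <= v -> (g_w Z w v <= g_w Z w' v)%E.

(* Main.v *)
Require Import Defs.
From HB Require Import structures.
From mathcomp Require Import all_boot all_order all_algebra.
From mathcomp Require Import all_classical all_reals all_analysis.
From mathcomp Require Import zify ring lra.
Import Order.TTheory GRing.Theory Num.Theory.
Import numFieldNormedType.Exports.
Local Open Scope classical_set_scope.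
Local Open Scope ring_scope.
Section sorting.
Context (R : realType) (m : nat).
Implicit Types z : 'I_m -> R.

Let ge := fun x y : R => y <= x.
Let ge_total : total ge. Proof. by move=> x y; exact: le_total. Qed.
Let ge_trans : transitive ge. Proof. by move=> y x z hxy hyz; exact: le_trans hyz hxy. Qed.

Lemma count_card (P : pred 'I_m) : count P (enum 'I_m) = #|P|.
Proof. by rewrite cardE enumT -size_filter /enum_mem. Qed.

Lemma rho_struct z : exists s', [/\ sort ge [seq z i | i <- enum 'I_m] = s',
  perm_eq s' [seq z i | i <- enum 'I_m], sorted ge s' & size s' = m].
Proof.
exists (sort ge [seq z i | i <- enum 'I_m]); split => //.
- by rewrite perm_sort.
- exact: sort_sorted.
- by rewrite size_sort size_map size_enum_ord.
Qed.

Lemma rho1_ub z (i : 'I_m) : z i <= rho 1 z.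
Proof.
rewrite /rho /=; have [s' [-> ps ss _]] := rho_struct z.
have : z i \in s' by rewrite (perm_mem ps); apply: map_f; rewrite mem_enum.
case: s' ps ss => [//|x r] ps /= ss.
rewrite inE => /orP[/eqP->//|zr].
by have /allP := order_path_min ge_trans ss; apply.
Qed.

Lemma rho1_mem z : (0 < m)%N -> exists i : 'I_m, rho 1 z = z i.
Proof.
move=> m0; rewrite /rho /=; have [s' [-> ps ss sz]] := rho_struct z.
case: s' ps ss sz => [|x r] ps ss sz /=; first by rewrite -sz in m0.
have : x \in [seq z i | i <- enum 'I_m] by rewrite -(perm_mem ps) mem_head.
by case/mapP => i _ ->; exists i.
Qed.

Lemma rho2_ub z (i j : 'I_m) : i != j -> Num.min (z i) (z j) <= rho 2 z.
Proof.
move=> ij; rewrite /rho /=; have [s' [-> ps ss sz]] := rho_struct z.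
rewrite leNgt; apply/negP => hlt.
have c1 : (count (fun y : R => (nth 0 s' 1 < y)%R) s' <= 1)%N.
  case: s' ps ss sz hlt => [|x1 [|y r]] ps ss sz hlt //=.
    by case: (_ < _).
  rewrite ltxx add0n.
  move: ss => /= /andP[_ ss].
  have /allP hr := order_path_min ge_trans ss.
  suff -> : count (fun y0 => y < y0) r = 0%N by rewrite addn0; case: (_ < _).
  apply/eqP; rewrite -leqn0 leqNgt -has_count; apply/hasPn => u ur.
  by rewrite -leNgt; exact: hr.
have c2 : (2 <= count (fun y : R => (nth 0 s' 1 < y)%R) s')%N.
  rewrite (permP ps) count_map count_card.
  apply/card_gt1P; exists i, j; split => //; rewrite inE /=.
    by apply: lt_le_trans hlt _; rewrite ge_min lexx.
  by apply: lt_le_trans hlt _; rewrite ge_min lexx orbT.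
by move: (leq_trans c2 c1).
Qed.

Lemma rho2_att z : (2 <= m)%N ->
  exists i j : 'I_m, i != j /\ rho 2 z <= Num.min (z i) (z j).
Proof.
move=> m2; rewrite /rho /=; have [s' [-> ps ss sz]] := rho_struct z.
have c2 : (2 <= count (fun y : R => (nth 0 s' 1 <= y)%R) s')%N.
  case: s' ps ss sz => [|x1 [|y r]] ps ss sz; rewrite -?sz // in m2.
  rewrite /= lexx.
  move: ss => /= /andP[h _]; move: h; rewrite /ge => ->.
  by rewrite /= add1n ltnS addnC addn1.
move: c2; rewrite (permP ps) count_map count_card => /card_gt1P[i [j [hi hj ij]]].
exists i, j; split => //; rewrite le_min.
by move: hi hj; rewrite !inE /= => -> ->.
Qed.

End sorting.
Arguments rho1_ub {R m}.
Arguments rho1_mem {R m}.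
Arguments rho2_ub {R m}.
Arguments rho2_att {R m}.
Section rho_meas.
Context d (T : measurableType d) (R : realType) (m : nat).
Variables (Z : 'I_m -> T -> R) (mZ : forall i, measurable_fun setT (Z i)).
Variables (i0 i1 : 'I_m) (h01 : i0 != i1).

Lemma bigmax_meas (I : Type) (r : seq I) (P : pred I) (F : I -> T -> R) (f0 : T -> R) :
  measurable_fun setT f0 -> (forall i, measurable_fun setT (F i)) ->
  measurable_fun setT (fun t => \big[Num.max/f0 t]_(i <- r | P i) F i t).
Proof.
move=> m0 mF; elim: r => [|x r ih].
  by under eq_fun do rewrite big_nil.
under eq_fun do rewrite big_cons.
case: (boolP (P x)) => Px.
  by apply: measurable_realfun.measurable_maxr.
exact: ih.
Qed.

Lemma rho1E (z : 'I_m -> R) : rho 1 z = \big[Num.max/z i0]_(i : 'I_m) z i.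
Proof.
apply/le_anti/andP; split.
  have [k ->] := rho1_mem z (leq_ltn_trans (leq0n _) (ltn_ord i0)).
  exact: le_bigmax.
by apply: bigmax_le => // *; exact: rho1_ub.
Qed.

Lemma rho2E (z : 'I_m -> R) : rho 2 z =
  \big[Num.max/Num.min (z i0) (z i1)]_(p : 'I_m * 'I_m | p.1 != p.2) Num.min (z p.1) (z p.2).
Proof.
apply/le_anti/andP; split.
  have m2 : (2 <= m)%N.
    rewrite leqNgt; apply/negP => hm; move/negP: h01; apply; apply/eqP/val_inj.
    change (nat_of_ord i0 = nat_of_ord i1).
    have := ltn_ord i0; have := ltn_ord i1; lia.
  have [i [j [ij hle]]] := rho2_att z m2.
  apply: (le_trans hle).
  exact: (@le_bigmax_cond _ _ _ _ (i, j) (fun p : 'I_m * 'I_m => p.1 != p.2) (fun p => Num.min (z p.1) (z p.2))).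
apply: bigmax_le; first exact: rho2_ub.
by move=> [i j] /= ij; exact: rho2_ub.
Qed.

Lemma meas_zbar : measurable_fun setT (fun t => zbar (fun i => Z i t)).
Proof.
rewrite /zbar.
apply: (measurableT_comp (f := fun x : R => x / m%:R)) => //.
  exact: measurable_realfun.mulrr_measurable.
exact: measurable_fun_approximation.measurable_sum.
Qed.

Lemma meas_rho1 : measurable_fun setT (fun t => rho 1 (fun i => Z i t)).
Proof.
under eq_fun do rewrite rho1E.
by apply: bigmax_meas.
Qed.

Lemma meas_rho2 : measurable_fun setT (fun t => rho 2 (fun i => Z i t)).
Proof.
under eq_fun do rewrite rho2E.
apply: bigmax_meas; first exact: measurable_realfun.measurable_minr.
by move=> p; apply: measurable_realfun.measurable_minr.
Qed.

End rho_meas.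
Arguments meas_zbar {d T R m Z}.
Arguments meas_rho1 {d T R m Z}.
Arguments meas_rho2 {d T R m Z}.
Lemma mul_le_abs (R : realType) (x d e : R) : 0 <= d -> d <= e -> x * d <= `|x| * e.
Proof.
move=> d0 de; apply: (le_trans (y := `|x| * d)).
  by apply: ler_wpM2r => //; exact: ler_norm.
by apply: ler_wpM2l.
Qed.

Section Vw.
Context (R : realType) (m : nat) (w : 'I_m -> R).
Hypothesis w01 : forall i, 0 <= w i <= 1.

Definition cw := sigma_w w * Num.sqrt (m%:R / (m%:R - 1)).
Definition fV (z : 'I_m -> R) (p : R * R) :=
  cw * p.1 * (rho 1 z - zbar z) + cw * p.2 * (zbar z - rho 2 z).

Lemma fVE z p : fV z p = (cw * (rho 1 z - zbar z)) * p.1 + (cw * (zbar z - rho 2 z)) * p.2.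
Proof. by rewrite /fV; ring. Qed.

Lemma Vw_le z v : (V_w w z <= v%:E)%E <-> (forall p, M_w w p -> fV z p <= v).
Proof.
rewrite /V_w /=; split.
  move=> h p Mp; rewrite -lee_fin; apply: le_trans h; apply: ereal_sup_ubound.
  exists (cw * p.1), (cw * p.2); split; first by exists p.
  by [].
move=> h; apply: ge_ereal_sup => x [l [u [[p Mp [-> ->]] ->]]].
rewrite lee_fin; exact: h.
Qed.

Lemma M_down p q : M_w w p -> 0 <= q.1 -> q.1 <= q.2 -> q.1 <= p.1 -> q.2 <= p.2 ->
  M_w w q.
Proof.
move=> [p1 [p12 hp]] q1 q12 qp1 qp2; split; first by [].
split; first by [].
move=> i j hij; apply: le_trans (hp i j hij).
have /andP[wj0 wj1] := w01 j; have /andP[wi0 wi1] := w01 i.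
apply: lerD; apply: ler_wpM2l => //.
by rewrite subr_ge0.
Qed.

Lemma density z v :
  (forall k1 k2 N : nat, M_w w (k1%:R / N.+1%:R, k2%:R / N.+1%:R) ->
     fV z (k1%:R / N.+1%:R, k2%:R / N.+1%:R) <= v) ->
  forall p, M_w w p -> fV z p <= v.
Proof.
move=> h p Mp; have [p1 [p12 _]] := Mp.
have p2 : 0 <= p.2 := le_trans p1 p12.
set a := cw * (rho 1 z - zbar z); set b := cw * (zbar z - rho 2 z).
set K := `|a| + `|b|.
have key : forall N : nat, fV z p <= v + K / N.+1%:R.
  move=> N; set n : R := N.+1%:R.
  have n0 : 0 < n by rewrite ltr0n.
  set k1 := Num.truncn (p.1 * n); set k2 := Num.truncn (p.2 * n).
  have hk1 := truncn_itv (mulr_ge0 p1 (ltW n0)).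
  have hk2 := truncn_itv (mulr_ge0 p2 (ltW n0)).
  move: hk1 hk2; rewrite -/k1 -/k2 => /andP[k1l k1u] /andP[k2l k2u].
  have q1l : k1%:R / n <= p.1 by rewrite ler_pdivrMr.
  have q2l : k2%:R / n <= p.2 by rewrite ler_pdivrMr.
  have q1u : p.1 - k1%:R / n <= n^-1.
    rewrite -(ler_pM2r n0) mulrBl divfK ?gt_eqF // mulVf ?gt_eqF //.
    rewrite -natr1 in k1u; lra.
  have q2u : p.2 - k2%:R / n <= n^-1.
    rewrite -(ler_pM2r n0) mulrBl divfK ?gt_eqF // mulVf ?gt_eqF //.
    rewrite -natr1 in k2u; lra.
  have Mq : M_w w (k1%:R / n, k2%:R / n).
    apply: (@M_down p _ Mp) => //=.
      by rewrite divr_ge0 // ltW.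
    rewrite ler_pM2r ?invr_gt0 // ler_nat; apply: le_truncn.
    by rewrite ler_pM2r.
  have := h k1 k2 N Mq; rewrite -/n => hq.
  have -> : fV z p = fV z (k1%:R / n, k2%:R / n) + a * (p.1 - k1%:R / n) + b * (p.2 - k2%:R / n).
    by rewrite !fVE /= -/a -/b; ring.
  rewrite /K mulrDl -addrA; apply: lerD => //.
  by apply: lerD; apply: mul_le_abs => //; rewrite subr_ge0.
rewrite leNgt; apply/negP => hv.
set e := fV z p - v.
have e0 : 0 < e by rewrite subr_gt0.
have K0 : 0 <= K / e.
  apply: divr_ge0; last exact: ltW.
  exact: (addr_ge0 (normr_ge0 a) (normr_ge0 b)).
have hb := archi_boundP K0.
set N := Num.Def.archi_bound (K / e) in hb.
have := key N; rewrite -lerBlDl -/e => he.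
have : K / N.+1%:R < e.
  rewrite ltr_pdivrMr ?ltr0n // mulrC -ltr_pdivrMr //.
  by apply: lt_le_trans hb _; rewrite ler_nat.
by rewrite ltNge he.
Qed.

End Vw.
Arguments cw {R m}.
Arguments fV {R m}.
Arguments fVE {R m}.
Arguments Vw_le {R m}.
Arguments M_down {R m}.
Arguments density {R m w}.
Section level.
Context d (T : measurableType d) (R : realType) (m : nat).
Variables (Z : 'I_m -> T -> R) (mZ : forall i, measurable_fun setT (Z i)).
Variables (i0 i1 : 'I_m) (h01 : i0 != i1).
Variables (w : 'I_m -> R) (w01 : forall i, 0 <= w i <= 1).

Lemma meas_fV q : measurable_fun setT (fun t => fV w (fun i => Z i t) q).
Proof.
rewrite /fV.
have mA : measurable_fun setT (fun t => rho 1 (fun i => Z i t) - zbar (fun i => Z i t)).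
  by apply: measurable_realfun.measurable_funB; [exact: (meas_rho1 mZ i0) | exact: (meas_zbar mZ)].
have mB : measurable_fun setT (fun t => zbar (fun i => Z i t) - rho 2 (fun i => Z i t)).
  by apply: measurable_realfun.measurable_funB; [exact: (meas_zbar mZ) | exact: (meas_rho2 mZ _ _ h01)].
apply: measurable_realfun.measurable_funD.
  exact: (measurable_realfun.measurable_funM (measurable_cst (cw w * q.1)) mA).
exact: (measurable_realfun.measurable_funM (measurable_cst (cw w * q.2)) mB).
Qed.

Lemma meas_level v : measurable [set t | (V_w w (fun i => Z i t) <= v%:E)%E].
Proof.
pose q (k1 k2 N : nat) : R * R := (k1%:R / N.+1%:R, k2%:R / N.+1%:R).
have -> : [set t | (V_w w (fun i => Z i t) <= v%:E)%E] =
    \bigcap_k1 \bigcap_k2 \bigcap_N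
      [set t | M_w w (q k1 k2 N) -> fV w (fun i => Z i t) (q k1 k2 N) <= v].
  apply/seteqP; split => t /=.
    by move=> /(Vw_le w) h k1 _ k2 _ N _ Mq; exact: h.
  move=> h; apply/(Vw_le w); apply: (density w01) => k1 k2 N.
  exact: (h k1 I k2 I N I).
apply: bigcapT_measurable => k1; apply: bigcapT_measurable => k2.
apply: bigcapT_measurable => N.
case: (pselect (M_w w (q k1 k2 N))) => Mq.
  have -> : [set t | M_w w (q k1 k2 N) -> fV w (fun i => Z i t) (q k1 k2 N) <= v] =
      setT `&` [set t | fV w (fun i => Z i t) (q k1 k2 N) <= cst v t].
    apply/seteqP; split => t /=; first by move=> h; split => //; exact: h.
    by move=> [_ h] _.
  apply: measurable_fun_le => //; first exact: meas_fV.
have -> : [set t | M_w w (q k1 k2 N) -> fV w (fun i => Z i t) (q k1 k2 N) <= v] = setT.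
  by apply/seteqP; split => t //= _ /Mq.
exact: measurableT.
Qed.

End level.

Lemma Vw_fin (R : realType) (m : nat) (w : 'I_m -> R) (Bd : R)
  (hB : forall p, M_w w p -> p.2 <= Bd) (z : 'I_m -> R) :
  exists r : R, forall v, r <= v -> (V_w w z <= v%:E)%E.
Proof.
set a := cw w * (rho 1 z - zbar z); set b := cw w * (zbar z - rho 2 z).
exists (`|a| * Bd + `|b| * Bd) => v rv; apply/(Vw_le w) => p Mp.
apply: le_trans rv; rewrite fVE -/a -/b.
have [p1 [p12 _]] := Mp; have := hB p Mp => p2B.
by apply: lerD; apply: mul_le_abs => //; [exact: le_trans p12 p2B | exact: le_trans p1 p12].
Qed.
Lemma AP01 (R : realType) (m : nat) (i : 'I_m) : 0 <= @antiplurality R m i <= 1.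
Proof. by rewrite /antiplurality; case: ifP => _; rewrite ?lexx ?ler01. Qed.

Lemma M_AP (R : realType) (m : nat) (mu : R) : 0 <= mu -> M_w (@antiplurality R m) (0, mu).
Proof.
move=> mu0; split => //=; split => // i j hij.
have hi : (val i == m.-1) = false.
  have := ltn_ord j; rewrite hij => hj; apply/negbTE/eqP => e.
  by move: hj; rewrite e; case: (m) => //= k; rewrite ltnn.
by rewrite /antiplurality hi mulr0 add0r subrr mul0r ler01.
Qed.

Lemma sum_AP (R : realType) (n : nat) :
  \sum_(i < n.+1) @antiplurality R n.+1 i = n%:R.
Proof.
rewrite big_ord_recr /= /antiplurality /= eqxx addr0.
rewrite (eq_bigr (fun _ => 1)); last first.
  by move=> i _; rewrite /= ifF //; apply/negbTE; rewrite neq_ltn ltn_ord.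
by rewrite sumr_const card_ord.
Qed.

Lemma sum_AP2 (R : realType) (n : nat) :
  \sum_(i < n.+1) @antiplurality R n.+1 i ^+ 2 = n%:R.
Proof.
rewrite -(sum_AP R n); apply: eq_bigr => i _.
by rewrite /antiplurality; case: ifP => _; rewrite ?expr0n ?expr1n.
Qed.

Lemma cAP_gt0 (R : realType) (n : nat) : 0 < cw (@antiplurality R n.+2).
Proof.
rewrite /cw /sigma_w /mean_w sum_AP sum_AP2.
set k : R := n.+2%:R.
have k2 : 2 <= k by rewrite /k ler_nat.
have h1 : (n.+1%:R : R) = k - 1 by rewrite /k -[n.+2]addn1 natrD addrK.
rewrite h1; apply: mulr_gt0; rewrite sqrtr_gt0.
  set x := (k - 1) / k.
  have x0 : 0 < x by rewrite divr_gt0 //; lra.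
  have x1 : x < 1 by rewrite ltr_pdivrMr; lra.
  by rewrite -[X in X - _]mulr1 expr2 -mulrBr mulr_gt0 // subr_gt0.
by rewrite divr_gt0 //; lra.
Qed.

Lemma normal_pos (R : realType) (a b M : R) : -M <= a -> a < b -> b <= M ->
  (0 < normal_prob 0 1 [set` `[a, b]])%E.
Proof.
move=> Ma ab bM.
set k := normal_peak (1 : R) * expR (- M ^+ 2 / (1 ^+ 2 *+ 2)).
have k0 : 0 < k by rewrite mulr_gt0 ?expR_gt0 // normal_peak_gt0 // oner_neq0.
have h0 : (0 < \int[@lebesgue_measure R]_(x in [set` `[a, b]]) (cst k%:E x))%E.
  rewrite integral_cst; [|exact: measurable_itv].
  have := lebesgue_measure_itv `[a, b]; rewrite /= lte_fin ab => hl.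
  apply: mule_gt0; first by rewrite lte_fin.
  apply: (eq_ind_r (fun x => 0 < x)%E _ hl).
  by rewrite -EFinB lte_fin subr_gt0.
rewrite /normal_prob; apply: (lt_le_trans h0 _).
eapply ge0_le_integral.
- exact: measurable_itv.
- by move=> x _; rewrite lee_fin ltW.
- exact: measurable_cst.
- apply/measurable_realfun.measurable_EFinP; apply: measurable_funTS.
  exact: measurable_normal_pdf.
move=> x /=; rewrite in_itv /= => /andP[ax xb].
rewrite lee_fin normal_pdfE ?oner_neq0 //= /k; apply: ler_wpM2l.
  exact: normal_peak_ge0.
rewrite /normal_fun ler_expR subr0 expr1n.
rewrite !mulNr lerN2; apply: ler_wpM2r; first by rewrite invr_ge0.
nra.
Qed.
Theorem proposition13 (R : realType) (d : measure_display) (T : measurableType d)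
    (P : probability T R) (m : nat) (Z : 'I_m -> {RV P >-> R}) :
  (3 <= m)%N ->
  iid_std_normal Z ->
  forall w : 'I_m -> R, positional_rule w ->
    (exists i : 'I_m, w i != @antiplurality R m i) ->
    ~ dominates Z w (@antiplurality R m).
Proof.
case: m Z => [|[|[|n]]] Z // _ [hdist hind] w [w0 [wl wmono]] [i hi] hdom.
have mZ : forall k, measurable_fun setT (fun t => Z k t).
  by move=> k; exact: measurable_funPT.
pose i0 : 'I_n.+3 := ord0.
pose i1 : 'I_n.+3 := @Ordinal n.+3 1 isT.
have h01 : i0 != i1 by [].
have w01 : forall k, 0 <= w k <= 1.
  move=> k; apply/andP; split.
    rewrite -(wl ord_max) //; apply: wmono; rewrite /= -ltnS ltn_ord //.
  by rewrite -(w0 ord0) //; apply: wmono.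
have [Bd hB] : exists Bd, forall p, M_w w p -> p.2 <= Bd.
  have hi0 : val i != 0%N.
    apply: contra hi => /eqP e; apply/eqP.
    by rewrite (w0 i e) /antiplurality e.
  have hil : val i != n.+2.
    apply: contra hi => /eqP e; apply/eqP.
    by rewrite (wl i e) /antiplurality e eqxx.
  have APi : @antiplurality R n.+3 i = 1 by rewrite /antiplurality (negbTE hil).
  have wi1 : w i < 1.
    rewrite lt_neqAle; have /andP[_ ->] := w01 i; rewrite andbT.
    by rewrite -APi.
  have hj : ((val i).+1 < n.+3)%N.
    move: (ltn_ord i) hil; change ((nat_of_ord i < n.+3)%N -> nat_of_ord i != n.+2 -> (nat_of_ord i).+1 < n.+3)%N.
    lia.
  pose j := Ordinal hj.
  have wpos : 0 < 1 - w i by rewrite subr_gt0.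
  exists (1 - w i)^-1 => p [p1 [p12 hp]].
  have h := hp i j erefl.
  have h' : (1 - w i) * p.2 <= 1.
    apply: le_trans h; rewrite lerDr; apply: mulr_ge0 => //.
    by have /andP[] := w01 j.
  rewrite -[p.2](mulKf (lt0r_neq0 wpos)) -[X in _ <= X]mulr1.
  by apply: ler_wpM2l => //; rewrite invr_ge0 ltW.
set L : R := n.+3%:R.
have L0 : 0 <= L by rewrite /L ler0n.
pose B (k : 'I_n.+3) : set R :=
  if k == i0 then [set` `[2 * L + 1, 2 * L + 2]] else [set` `[-1, 1]].
have mB : forall k, measurable (B k).
  by move=> k; rewrite /B; case: ifP => _; exact: measurable_itv.
pose G := \bigcap_(k in [set: 'I_n.+3]) ((fun t => Z k t) @^-1` B k).
have mG : measurable G.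
  apply: fin_bigcap_measurable; first exact: finite_finset.
  by move=> k _; have := mZ k measurableT _ (mB k); rewrite setTI.
have PG : (0 < P G)%E.
  rewrite /G (hind B mB).
  apply: (big_ind (fun x => 0 < x)%E) => //.
    by move=> x y; exact: mule_gt0.
  move=> k _; rewrite hdist // /B; case: ifP => _.
    by apply: (@normal_pos R _ _ (2 * L + 2)); lra.
  by apply: (@normal_pos R _ _ (2 * L + 2)); lra.
have key : forall (v : R) t, G t ->
    ~ (V_w (@antiplurality R n.+3) (fun k => Z k t) <= v%:E)%E.
  move=> v t Gt hV; set z := fun k => Z k t.
  have hz : forall k, B k (z k) by move=> k; exact: (Gt k I).
  have hz0 : 2 * L + 1 <= z i0.
    by have := hz i0; rewrite /B eqxx /= in_itv /= => /andP[].
  have hzk : forall k, k != i0 -> -1 <= z k <= 1.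
    by move=> k /negbTE kn; have := hz k; rewrite /B kn /= in_itv.
  have sz : L < \sum_(k < n.+3) z k.
    have e : \sum_(k < n.+3) (z k + 1) = \sum_(k < n.+3) z k + L.
      by rewrite big_split /= sumr_const card_ord.
    have : z i0 + 1 <= \sum_(k < n.+3) (z k + 1).
      rewrite (bigD1 i0) //= lerDl; apply: sumr_ge0 => k /hzk /andP[hk _].
      by rewrite -lerBlDr sub0r.
    rewrite e; lra.
  have zb : 1 < zbar z.
    by rewrite /zbar -/L ltr_pdivlMr ?mul1r // /L ltr0n.
  have r2 : rho 2 z <= 1.
    have [a [b [ab hab]]] := rho2_att z (isT : (2 <= n.+3)%N).
    apply: (le_trans hab).
    case: (eqVneq a i0) => [ea|na].
      have nb : b != i0 by rewrite -ea eq_sym.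
      by have /andP[_ hb] := hzk b nb; rewrite ge_min hb orbT.
    by have /andP[_ ha] := hzk a na; rewrite ge_min ha.
  set b := zbar z - rho 2 z.
  have b0 : 0 < b by rewrite /b subr_gt0; lra.
  have c0 := cAP_gt0 R n.+1.
  set c := cw (@antiplurality R n.+3) in c0.
  set mu := (`|v| + 1) / (c * b).
  have mu0 : 0 <= mu by rewrite /mu divr_ge0 // ?addr_ge0 // ltW // mulr_gt0.
  have := (Vw_le (@antiplurality R n.+3) z v).1 hV (0, mu) (@M_AP R n.+3 mu mu0).
  rewrite /fV /= -/c mulr0 mul0r add0r -/b.
  have -> : c * mu * b = `|v| + 1.
    rewrite /mu; field; apply/andP; split; exact: lt0r_neq0.
  have := ler_norm v; lra.
pose F (N : nat) := [set t | (V_w w (fun k => Z k t) <= N%:R%:E)%E].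
have mF : forall N, measurable (F N).
  by move=> N; exact: (@meas_level _ _ _ _ _ mZ i0 i1 h01 w w01).
have hup : \bigcup_N F N = setT.
  apply/seteqP; split => // t _.
  have [r hr] := @Vw_fin R n.+3 w Bd hB (fun k => Z k t).
  exists (Num.Def.archi_bound `|r|) => //; rewrite /F /=; apply: hr.
  apply: le_trans (ler_norm r) _; apply: ltW; exact: archi_boundP (normr_ge0 r).
have hnd : {homo F : a b / (a <= b)%N >-> (a <= b)%O}.
  move=> a b ab; apply/subsetPset => t /= h; apply: le_trans h _.
  by rewrite lee_fin ler_nat.
have hcvg := nondecreasing_cvg_mu (mu := P) mF (ltac:(rewrite hup; exact: measurableT)) hnd.
rewrite hup in hcvg.
have e1 : P [set: T] = 1%E by exact: probability_setT.
have hlim : lim ((P \o F) x @[x --> \oo]) = 1%E.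
  by apply: etrans e1; exact: cvg_lim.
have hle : forall N, (P (F N) <= 1 - P G)%E.
  move=> N; apply: le_trans (hdom N%:R (ler0n _ _)) _.
  rewrite /g_w -probability_setC //; apply: le_measure; rewrite ?inE.
  - exact: (@meas_level _ _ _ _ _ mZ i0 i1 h01 _ (@AP01 R n.+3)).
  - exact: measurableC.
  - by move=> t hV Gt; exact: key N%:R t Gt hV.
have : (lim ((P \o F) x @[x --> \oo]) <= 1 - P G)%E.
  apply: lime_le; first by apply/cvg_ex; eexists; exact: hcvg.
  by apply: nearW => N; exact: hle.
rewrite hlim.
have PG1 := probability_le1 P mG.
move: (P G) PG PG1 => [r| |] //; rewrite ?lte_fin ?lee_fin -?EFinB ?lee_fin.
lra.
Qed.
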